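(* Let $t \ge 2$ and let $q$ be a prime power. There do not exist vertices $a_1, b_1, \dots, a_{t+2}, b_{t+2}$ of $G(t,q)$ (not necessarily distinct) such that $a_i b_j \in E(G(t,q))$ for all $1 \le i < j \le t+2$ and $a_i b_i \notin E(G(t,q))$ for all $i \in [t+2]$.
   Context: $PG(t,q)$ denotes the projective space of dimension $t$ over $\mathbb{F}_q$: its points are the equivalence classes of nonzero vectors in $\mathbb{F}_q^{t+1}$ under the relation identifying a vector with its nonzero scalar multiples. $G(t,q)$ is the graph (possibly with loops) with vertex set $PG(t,q)$ in which two (not necessarily distinct) vertices represented by $\mathbf{x}, \mathbf{y}$ are adjacent if and only if $\langle \mathbf{x}, \mathbf{y}\rangle = \sum_{i=1}^{t+1} x_i y_i = 0$; in particular there is a loop at $\mathbf{x}$ iff $\langle \mathbf{x},\mathbf{x}\rangle = 0$, and $a_ia_i$ being an edge means a loop. *)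

(* Defs.v *)
From mathcomp Require Import all_boot all_order all_algebra all_field.
Set Implicit Arguments. Unset Strict Implicit. Unset Printing Implicit Defensive.
Import GRing.Theory.
Local Open Scope ring_scope.

(* Points of PG(t,q), q = #|F| for a finite field F, are represented by their
   nonzero representative vectors in F^(t+1) (row vectors).  A vertex of
   G(t,q) is any such nonzero vector; two representatives of the same
   projective point have the same adjacencies, so quantifying over
   representatives is the same as quantifying over projective points. *)
Definition pg_vertex (F : finFieldType) (n : nat) (x : 'rV[F]_n) : bool :=
  x != 0.

Definition pg_dot (F : finFieldType) (n : nat) (x y : 'rV[F]_n) : F :=
  \sum_(i < n) x ord0 i * y ord0 i.

Definition G_adj (F : finFieldType) (n : nat) (x y : 'rV[F]_n) : bool :=
  pg_dot x y == 0.

(* Main.v *)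
Require Import Defs.
From mathcomp Require Import all_boot all_order all_algebra all_field.
Import GRing.Theory.
Local Open Scope ring_scope.

Theorem lemma2p2 (F : finFieldType) (t : nat) (ht : (2 <= t)%N) :
  ~ exists (a b : 'I_(t + 2) -> 'rV[F]_(t + 1)),
      [/\ forall i, pg_vertex (a i) && pg_vertex (b i),
          forall i j : 'I_(t + 2), (i < j)%N -> G_adj (a i) (b j)
        & forall i, ~~ G_adj (a i) (b i)].
Proof.
case=> a [b [_ Hlt Hdiag]].
pose A : 'M[F]_(t + 2, t + 1) := \matrix_(i, k) a i ord0 k.
pose B : 'M[F]_(t + 1, t + 2) := \matrix_(k, j) b j ord0 k.
have ME i j : (A *m B) i j = pg_dot (a i) (b j).
  by rewrite !mxE /pg_dot; apply: eq_bigr => k _; rewrite !mxE.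
have trig : is_trig_mx (A *m B).
  apply/is_trig_mxP => i j hij; rewrite ME; exact/eqP/Hlt.
have unit : A *m B \in unitmx.
  rewrite unitmxE (det_trig trig) unitfE.
  rewrite prodf_seq_neq0; apply/allP => i _ /=.
  by rewrite ME; exact: Hdiag.
have := mxrankM_maxl A B; rewrite (mxrank_unit unit).
move=> h; have := leq_trans h (rank_leq_col A).
by rewrite addnS ltnn.
Qed.
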